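(* Let $n\ge 5$ and let $X$ be a nonempty set of Latin squares of order $n$ such that for every $L\in X$ and every permutation $\sigma$ of $[1,n]$, the square $\sigma(L)$ also lies in $X$. Let $m$ be the maximum inner distance of a square in $X$. Then for every integer $k\in[1,m]$ there exists a square in $X$ of inner distance $k$.
   Context: Symbols are $[1,n]=\{1,\dots,n\}$. For $a,b\in[1,n]$, $\mathrm{dist}(a,b)$ is the minimum of the residues of $a-b$ and $b-a$ modulo $n$ (in $[0,n-1]$). A Latin square of order $n$ is an $n\times n$ matrix with entries in $[1,n]$ in which every row and column contains each symbol exactly once. Cells are adjacent if they share an edge horizontally or vertically; the inner distance of a Latin square is the minimum of $\mathrm{dist}$ over symbols in adjacent cells. For a permutation $\sigma$ of $[1,n]$, $\sigma(L)$ is the square whose $(i,j)$ entry is $\sigma(m_{i,j})$. *)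

(* Defs.v *)
From mathcomp Require Import all_boot all_order all_fingroup.
Set Implicit Arguments. Unset Strict Implicit. Unset Printing Implicit Defensive.

(* Symbols [1,n] are represented by 'I_n (symbol s+1 <-> ordinal s);
   the cyclic distance is shift-invariant, so this is harmless. *)

Definition latin_square (n : nat) (L : {ffun 'I_n * 'I_n -> 'I_n}) : Prop :=
  (forall i : 'I_n, injective (fun j => L (i, j))) /\
  (forall j : 'I_n, injective (fun i => L (i, j))).

Definition cdist (n : nat) (a b : 'I_n) : nat :=
  minn ((a + n - b) %% n) ((b + n - a) %% n).

Definition adjacent (n : nat) (c d : 'I_n * 'I_n) : bool :=
  ((c.1 == d.1) && ((c.2.+1 == d.2) || (d.2.+1 == c.2))) ||
  ((c.2 == d.2) && ((c.1.+1 == d.1) || (d.1.+1 == c.1))).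

(* inner distance: minimum of dist over symbols in adjacent cells
   (default n is never attained when n >= 2, since all dists are < n). *)
Definition inner_distance (n : nat) (L : {ffun 'I_n * 'I_n -> 'I_n}) : nat :=
  \big[minn/n]_(p : ('I_n * 'I_n) * ('I_n * 'I_n) | adjacent p.1 p.2)
     cdist (L p.1) (L p.2).

Definition perm_square (n : nat) (s : {perm 'I_n}) (L : {ffun 'I_n * 'I_n -> 'I_n})
  : {ffun 'I_n * 'I_n -> 'I_n} := [ffun c => s (L c)].

(* Main.v *)
Require Import Defs.
From mathcomp Require Import all_boot all_order all_fingroup.
From mathcomp Require Import zify.
From Stdlib Require Import Classical.

Lemma modsub (n a b : nat) : a < n -> b < n ->
  (a + n - b) %% n = if b <= a then a - b else a + n - b.
Proof.
move=> an bn; case: leqP => ba.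
  by rewrite -addnBAC // modnDr modn_small //; lia.
by rewrite modn_small //; lia.
Qed.

Definition cd n a b := minn (maxn a b - minn a b) (n - (maxn a b - minn a b)).

Lemma cdistE n (a b : 'I_n) : cdist a b = cd n a b.
Proof.
rewrite /cdist !modsub // /cd; have := ltn_ord a; have := ltn_ord b.
move: (nat_of_ord a) (nat_of_ord b) => x y *.
case: leqP => h1; case: leqP => h2; lia.
Qed.

Lemma ordSE n (x : 'I_n) : nat_of_ord (ordS x) = if x.+1 < n then x.+1 else 0.
Proof.
rewrite /ordS /=. case: ltnP => h; first by rewrite modn_small.
have -> : x.+1 = n by have := ltn_ord x; lia.
by rewrite modnn.
Qed.

Lemma tpermV n (x y u : 'I_n) : nat_of_ord (tperm x y u) =
  if nat_of_ord u == x then nat_of_ord y else if nat_of_ord u == y then nat_of_ord x else nat_of_ord u.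
Proof.
case: tpermP => [->|->|ux uy]; rewrite ?eqxx //.
  by case: ifP => // /eqP/val_inj ->.
case: ifP => [/eqP/val_inj//|_]. by case: ifP => [/eqP/val_inj//|].
Qed.

Lemma cd_step n a b c y : a < n -> b < n -> c < n ->
  (y = c.+1 /\ c.+1 < n) \/ (y = 0 /\ c.+1 = n) ->
  cd n (if a == c then y else if a == y then c else a)
       (if b == c then y else if b == y then c else b) <= (cd n a b).+1.
Proof.
move=> ha hb hc hy.
case: ifP => /eqP h1; [|case: ifP => /eqP h2];
(case: ifP => /eqP h3; [|case: ifP => /eqP h4]);
rewrite /cd; lia.
Qed.

Lemma cdist_step n (x u v : 'I_n) :
  cdist (tperm x (ordS x) u) (tperm x (ordS x) v) <= (cdist u v).+1.
Proof.
rewrite !cdistE !tpermV; apply: cd_step => //.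
rewrite ordSE; case: ifP => h; [left|right] => //; have := ltn_ord x; lia.
Qed.

Lemma cdist_step' n (x u v : 'I_n) :
  cdist u v <= (cdist (tperm x (ordS x) u) (tperm x (ordS x) v)).+1.
Proof. by have := @cdist_step n x (tperm x (ordS x) u) (tperm x (ordS x) v); rewrite !tpermK. Qed.

Lemma bigmin_le (I : finType) (P : pred I) (F G : I -> nat) n0 :
  (forall i, P i -> F i <= (G i).+1) ->
  \big[minn/n0]_(i | P i) F i <= (\big[minn/n0]_(i | P i) G i).+1.
Proof.
move=> h; elim/big_rec2: _ => [|i x y Pi hxy]; first lia.
have := h i Pi; lia.
Qed.

Lemma bigmin_seq (I : eqType) (s : seq I) (F : I -> nat) n0 i0 :
  i0 \in s -> \big[minn/n0]_(i <- s) F i <= F i0.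
Proof.
elim: s => [//|x s IH]; rewrite in_cons big_cons => /orP[/eqP ->|/IH h].
  exact: geq_minl.
exact: leq_trans (geq_minr _ _) h.
Qed.

Lemma bigmin_leF (I : finType) (P : pred I) (F : I -> nat) n0 i0 :
  P i0 -> \big[minn/n0]_(i | P i) F i <= F i0.
Proof.
move=> Pi0; rewrite -big_filter; apply: bigmin_seq.
by rewrite mem_filter Pi0 mem_index_enum.
Qed.

Lemma id_step n (s : {perm 'I_n}) x L :
  inner_distance (perm_square s L) <=
  (inner_distance (perm_square (s * tperm x (ordS x)) L)).+1.
Proof.
apply: bigmin_le => p _; rewrite !ffunE !permM; apply: cdist_step'.
Qed.

Lemma ivt (f : nat -> nat) k d : (forall t, f t <= (f t.+1).+1) ->
  k <= f 0 -> f d <= k -> exists t, f t = k.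
Proof.
move=> hs h0; elim: d => [|d IH] hd; first by exists 0; lia.
case: (leqP (f d) k) => h; first exact: IH.
exists d.+1; have := hs d; lia.
Qed.

Theorem mainTheorem3 (n : nat) (X : {ffun 'I_n * 'I_n -> 'I_n} -> Prop)
  (m : nat) :
  5 <= n ->
  (forall L, X L -> latin_square L) ->
  (exists L, X L) ->
  (forall L (s : {perm 'I_n}), X L -> X (perm_square s L)) ->
  (exists2 L0, X L0 & inner_distance L0 = m) ->
  (forall L, X L -> inner_distance L <= m) ->
  forall k : nat, 1 <= k <= m -> exists2 L, X L & inner_distance L = k.
Proof.
move=> n5 lat _ closed [L0 XL0 <-] _ k /andP[k1 km].
have h0 : 0 < n by lia.
have h1 : 1 < n by lia.
pose r0 := Ordinal h0. pose c1 := Ordinal h1.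
pose a := L0 (r0, r0). pose b := L0 (r0, c1).
have ab : a != b.
  apply/eqP => e; have := (lat L0 XL0).1 r0 r0 c1 e.
  by move/(congr1 (@nat_of_ord n)).
pose sig t := iter t (fun s : {perm 'I_n} => (s * tperm (s b) (ordS (s b)))%g) 1%g.
pose f t := inner_distance (perm_square (sig t) L0).
have sigS t : sig t.+1 = (sig t * tperm (sig t b) (ordS (sig t b)))%g by [].
have sigb t : nat_of_ord (sig t b) = (b + t) %% n.
  elim: t => [|t IH]; first by rewrite /= perm1 addn0 modn_small.
  rewrite sigS permM tpermL /= IH.
  by rewrite -[in LHS]addn1 modnDml addn1 addnS.
pose P t := ordS (sig t b) == sig t a.
have [t0 Pt0] : exists t, P t.
  apply: NNPP => nP.
  have nPt := not_ex_all_not _ _ nP.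
  have siga t : sig t a = a.
    elim: t => [|t IH]; first by rewrite /= perm1.
    rewrite sigS permM IH tpermD //.
      by rewrite -[X in _ != X]IH (inj_eq perm_inj) eq_sym.
    by apply/negP => /eqP e; apply: (nPt t); rewrite /P IH e.
  pose t := a + (n - 1 - b).
  apply: (nPt t); rewrite /P siga; apply/eqP/val_inj => /=.
  rewrite sigb -addn1 modnDml.
  have -> : b + t + 1 = a + n by have := ltn_ord b; rewrite /t; lia.
  by rewrite modnDr modn_small.
have ft0 : f t0 <= 1.
  pose p0 := ((r0, r0), (r0, c1)).
  apply: leq_trans (@bigmin_leF _ _ _ _ p0 _) _; first by rewrite /adjacent /= ?eqxx.
  rewrite /= !ffunE -/a -/b.
  move/eqP: Pt0 => <-; rewrite cdistE ordSE /cd.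
  have := ltn_ord (sig t0 b).
  case: (ltnP (sig t0 b).+1 n) => ?; lia.
have f0 : f 0 = inner_distance L0.
  rewrite /f; congr inner_distance; apply/ffunP => c; by rewrite ffunE /= perm1.
have [t ft] := @ivt f k t0 (fun t => @id_step n (sig t) (sig t b) L0) ltac:(lia) ltac:(lia).
by exists (perm_square (sig t) L0); [apply: closed|].
Qed.
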